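(* Let $S\subset \mathbb{R}^2$ be such that $S$ and $S^\mathsf{c}$ satisfy the $r$-rolling condition. Then for every $\alpha>0$, any open ball of radius $\alpha$ with center in $S$ contains an open ball of radius $\tfrac12 \min\{\alpha,r\}$ which is included in $S$.
   Context: A set $T\subset\mathbb{R}^2$ satisfies the $r$-rolling condition ($r>0$) if for every $x \in \partial T$ there is an open ball $B$ of radius $r$ with $B \cap T = \emptyset$ and $x \in \partial B$. $S^\mathsf{c}=\mathbb{R}^2\setminus S$. *)

(* Defs.v *)
From Stdlib Require Import Reals Lra.
Open Scope R_scope.

Definition point := (R * R)%type.

Definition dist2 (p q : point) : R :=
  sqrt ((fst p - fst q) ^ 2 + (snd p - snd q) ^ 2).

Definition ball2 (c : point) (rho : R) (x : point) : Prop := dist2 c x < rho.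

Definition compl (S : point -> Prop) (x : point) : Prop := ~ S x.

Definition boundary (T : point -> Prop) (x : point) : Prop :=
  forall eps, 0 < eps ->
    (exists y, ball2 x eps y /\ T y) /\ (exists y, ball2 x eps y /\ ~ T y).

Definition rolling (r : R) (T : point -> Prop) : Prop :=
  forall x, boundary T x ->
    exists c : point,
      (forall y, ball2 c r y -> ~ T y) /\ boundary (ball2 c r) x.

(* Main.v *)
Require Import Defs.
From Stdlib Require Import Reals Lra Psatz Classical.
Open Scope R_scope.

Definition sqd (p q : point) := (fst p - fst q)^2 + (snd p - snd q)^2.
Definition lerp (p q : point) (s : R) : point :=
  (fst p + s * (fst q - fst p), snd p + s * (snd q - snd p)).

Lemma sq_le_le w k : 0 <= k -> w^2 <= k^2 -> w <= k.
Proof. intros Hk H. destruct (Rle_lt_dec w k) as [|Hw]; auto.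
  assert (0 < (w-k)*(w+k)) by (apply Rmult_lt_0_compat; lra). nra. Qed.

Lemma sqd_ge0 p q : 0 <= sqd p q.
Proof. unfold sqd; apply Rplus_le_le_0_compat; apply pow2_ge_0. Qed.
Lemma dist2_ge0 p q : 0 <= dist2 p q.
Proof. apply sqrt_pos. Qed.
Lemma dist2_sq p q : dist2 p q ^ 2 = sqd p q.
Proof. unfold dist2. fold (sqd p q). rewrite <- Rsqr_pow2, Rsqr_sqrt; auto using sqd_ge0. Qed.
Lemma dist2_lt p q k : 0 <= k -> (dist2 p q < k <-> sqd p q < k ^ 2).
Proof. intros Hk. pose proof (dist2_sq p q). pose proof (dist2_ge0 p q). split; intros; nra. Qed.
Lemma dist2_le p q k : 0 <= k -> (dist2 p q <= k <-> sqd p q <= k ^ 2).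
Proof. intros Hk. pose proof (dist2_sq p q). pose proof (dist2_ge0 p q). split; intros; nra. Qed.
Lemma sqd_sym p q : sqd p q = sqd q p.
Proof. unfold sqd; ring. Qed.
Lemma dist2_sym p q : dist2 p q = dist2 q p.
Proof. unfold dist2. fold (sqd p q). fold (sqd q p). now rewrite sqd_sym. Qed.
Lemma dist2_eq p q k : 0 <= k -> sqd p q = k ^ 2 -> dist2 p q = k.
Proof. intros Hk H. pose proof (dist2_sq p q). pose proof (dist2_ge0 p q). nra. Qed.
Lemma dist2_eq_sq p q k : dist2 p q = k -> sqd p q = k ^ 2.
Proof. intros <-. now rewrite dist2_sq. Qed.
Lemma dist2_refl p : dist2 p p = 0.
Proof. apply dist2_eq; [lra|]. unfold sqd; ring. Qed.

Lemma dist2_tri p q r : dist2 p r <= dist2 p q + dist2 q r.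
Proof.
  pose proof (dist2_sq p q) as Ha. pose proof (dist2_sq q r) as Hb.
  pose proof (dist2_ge0 p q). pose proof (dist2_ge0 q r).
  set (a := dist2 p q) in *. set (b := dist2 q r) in *.
  apply dist2_le; [lra|].
  destruct p as [p1 p2], q as [q1 q2], r as [r1 r2]. unfold sqd in *; cbn [fst snd] in *.
  set (u1 := p1 - q1). set (u2 := p2 - q2). set (v1 := q1 - r1). set (v2 := q2 - r2).
  replace (p1 - r1) with (u1 + v1) by (unfold u1, v1; ring).
  replace (p2 - r2) with (u2 + v2) by (unfold u2, v2; ring).
  fold u1 u2 in Ha. fold v1 v2 in Hb.
  assert (CS : (u1*v1+u2*v2)^2 <= (a*b)^2).
  { replace ((a*b)^2) with (a^2*b^2) by ring. rewrite Ha, Hb.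
    assert (0 <= (u1*v2-u2*v1)^2) by apply pow2_ge_0.
    replace ((u1 ^ 2 + u2 ^ 2) * (v1 ^ 2 + v2 ^ 2)) with ((u1*v1+u2*v2)^2 + (u1*v2-u2*v1)^2) by ring. lra. }
  clearbody u1 u2 v1 v2 a b.
  assert (u1*v1+u2*v2 <= a*b) by (apply sq_le_le; auto; apply Rmult_le_pos; auto).
  nra.
Qed.

Lemma sqd_lerp_l p q s : sqd p (lerp p q s) = s^2 * sqd p q.
Proof. unfold sqd, lerp; simpl; ring. Qed.
Lemma sqd_lerp_r p q s : sqd (lerp p q s) q = (1-s)^2 * sqd p q.
Proof. unfold sqd, lerp; simpl; ring. Qed.
Lemma sqd_lerp2 p q s t : sqd (lerp p q s) (lerp p q t) = (s-t)^2 * sqd p q.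
Proof. unfold sqd, lerp; simpl; ring. Qed.
Lemma dist_lerp_l p q s : 0 <= s -> dist2 p (lerp p q s) = s * dist2 p q.
Proof. intros. apply dist2_eq. pose proof (dist2_ge0 p q); nra.
  rewrite sqd_lerp_l, <- dist2_sq. ring. Qed.
Lemma dist_lerp_r p q s : s <= 1 -> dist2 (lerp p q s) q = (1-s) * dist2 p q.
Proof. intros. apply dist2_eq. pose proof (dist2_ge0 p q); nra.
  rewrite sqd_lerp_r, <- dist2_sq. ring. Qed.
Lemma lerp_close p q s t h eps : 0 <= h -> h * (dist2 p q + 1) < eps -> Rabs (s - t) <= h ->
  dist2 (lerp p q s) (lerp p q t) < eps.
Proof.
  intros Hh He Hst. pose proof (dist2_ge0 p q). apply dist2_lt; [nra|].
  rewrite sqd_lerp2, <- dist2_sq.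
  assert ((s-t)^2 <= h^2). { rewrite <- (pow2_abs (s-t)). pose proof (Rabs_pos (s-t)). nra. }
  set (D := dist2 p q) in *.
  assert (0 <= h * D < eps) by nra.
  assert ((h*D)^2 < eps^2) by nra. nra.
Qed.

Lemma lerp0 p q : lerp p q 0 = p.
Proof. destruct p; unfold lerp; simpl; f_equal; ring. Qed.
Lemma lerp1 p q : lerp p q 1 = q.
Proof. destruct p, q; unfold lerp; simpl; f_equal; ring. Qed.

Lemma segment (S : point -> Prop) x y : S x -> ~ S y ->
  exists z, boundary S z /\ dist2 x z <= dist2 x y.
Proof.
  intros Sx Sy.
  set (E := fun t => 0 <= t <= 1 /\ S (lerp x y t)).
  assert (HB: bound E) by (exists 1; intros t [Ht _]; lra).
  assert (HE: exists t, E t) by (exists 0; split; [lra| now rewrite lerp0]).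
  destruct (completeness E HB HE) as [m [Hub Hlub]].
  assert (Hm0 : 0 <= m) by (apply Hub; split; [lra| now rewrite lerp0]).
  assert (Hm1 : m <= 1) by (apply Hlub; intros t [Ht _]; lra).
  pose proof (dist2_ge0 x y) as HD.
  exists (lerp x y m). split.
  - intros eps Heps. set (h := eps / (dist2 x y + 2)).
    assert (Hh : 0 < h) by (unfold h; apply Rdiv_lt_0_compat; lra).
    assert (Hh2 : h * (dist2 x y + 1) < eps).
    { unfold h. apply Rmult_lt_reg_r with (dist2 x y + 2); [lra|].
      field_simplify; [|lra]. nra. }
    split.
    + destruct (classic (exists t, E t /\ m - h < t)) as [[t [Et Ht]]|Hn].
      * exists (lerp x y t). split; [|apply Et].
        unfold ball2. apply lerp_close with h; try lra.
        assert (t <= m) by (apply Hub; auto).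
        rewrite Rabs_right; lra.
      * exfalso. assert (m <= m - h); [|lra]. apply Hlub. intros t Et.
        destruct (Rle_lt_dec t (m - h)); auto. exfalso; apply Hn; eauto.
    + destruct (Req_dec m 1) as [->|Hm].
      * exists y. rewrite lerp1. split; auto. unfold ball2. rewrite dist2_refl. lra.
      * set (t := Rmin 1 (m + h/2)).
        assert (Ht1 : m < t) by (unfold t; apply Rmin_glb_lt; lra).
        assert (Ht2 : t <= m + h/2) by apply Rmin_r.
        assert (Ht3 : t <= 1) by apply Rmin_l.
        exists (lerp x y t). split.
        -- unfold ball2. apply lerp_close with h; try lra. rewrite Rabs_left; lra.
        -- intro St. assert (t <= m) by (apply Hub; split; [lra|auto]). lra.
  - rewrite dist_lerp_l by lra. nra.
Qed.

Lemma boundary_compl (S : point -> Prop) z : boundary S z -> boundary (compl S) z.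
Proof.
  intros H eps He. destruct (H eps He) as [[y1 [H1 H1']] [y2 [H2 H2']]].
  split; [exists y2 | exists y1]; unfold compl; split; auto.
Qed.

Lemma boundary_ball c r z : boundary (ball2 c r) z -> dist2 c z = r.
Proof.
  intros H. unfold ball2 in *.
  destruct (Rtotal_order (dist2 c z) r) as [Hl|[He|Hg]]; auto; exfalso.
  - destruct (H (r - dist2 c z)) as [_ [y [Hy1 Hy2]]]; [lra|].
    unfold ball2 in Hy1. pose proof (dist2_tri c z y). lra.
  - destruct (H (dist2 c z - r)) as [[y [Hy1 Hy2]] _]; [lra|].
    unfold ball2 in Hy1. pose proof (dist2_tri c y z). rewrite (dist2_sym y z) in *. lra.
Qed.

Lemma sq0 x : x ^ 2 = 0 -> x = 0.
Proof. intros H. simpl in H. rewrite Rmult_1_r in H. destruct (Rmult_integral _ _ H); auto. Qed.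

Lemma opposite (S : point -> Prop) c1 c2 z r : 0 < r ->
  (forall y, ball2 c1 r y -> S y) -> (forall y, ball2 c2 r y -> ~ S y) ->
  dist2 c1 z = r -> dist2 c2 z = r ->
  fst c2 = 2 * fst z - fst c1 /\ snd c2 = 2 * snd z - snd c1.
Proof.
  intros Hr H1 H2 D1 D2.
  apply dist2_eq_sq in D1, D2.
  set (m := ((fst c1 + fst c2)/2, (snd c1 + snd c2)/2)).
  assert (Hs : 4 * r^2 <= sqd c1 c2).
  { destruct (Rle_lt_dec (4 * r^2) (sqd c1 c2)) as [|Hl]; auto. exfalso.
    assert (sqd c1 m = sqd c1 c2 / 4) by (unfold sqd, m; simpl; field).
    assert (sqd c2 m = sqd c1 c2 / 4) by (unfold sqd, m; simpl; field).
    apply (H2 m); [|apply H1]; unfold ball2; apply dist2_lt; lra. }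
  destruct c1 as [a1 a2], c2 as [b1 b2], z as [z1 z2]. unfold sqd in *; cbn [fst snd] in *.
  assert (E : (a1 + b1 - 2*z1)^2 + (a2 + b2 - 2*z2)^2 =
     2*((a1 - z1) ^ 2 + (a2 - z2) ^ 2) + 2*((b1 - z1) ^ 2 + (b2 - z2) ^ 2) - ((a1 - b1) ^ 2 + (a2 - b2) ^ 2)) by ring.
  rewrite D1, D2 in E.
  assert (0 <= (a1 + b1 - 2*z1)^2) by apply pow2_ge_0.
  assert (0 <= (a2 + b2 - 2*z2)^2) by apply pow2_ge_0.
  assert (E1 : (a1 + b1 - 2*z1)^2 = 0) by lra.
  assert (E2 : (a2 + b2 - 2*z2)^2 = 0) by lra.
  apply sq0 in E1. apply sq0 in E2. lra.
Qed.

Lemma finish (S : point -> Prop) x alpha rho r z c :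
  0 < rho -> 2 * rho <= alpha -> rho <= r / 2 -> 0 < r ->
  dist2 c z = r -> (forall y, ball2 c r y -> S y) ->
  sqd x (lerp z c (rho / r)) <= rho ^ 2 ->
  exists c', (forall y, ball2 c' rho y -> ball2 x alpha y) /\
             (forall y, ball2 c' rho y -> S y).
Proof.
  intros Hrho Ha Hr Hr0 Dc Hc Hx.
  exists (lerp z c (rho / r)).
  assert (Hs : rho / r <= 1) by (apply Rmult_le_reg_r with r; [lra|]; field_simplify; lra).
  assert (Dc' : dist2 (lerp z c (rho/r)) c = r - rho).
  { rewrite dist_lerp_r by auto. rewrite dist2_sym, Dc. field. lra. }
  apply dist2_le in Hx; [|lra].
  set (c' := lerp z c (rho / r)) in *. clearbody c'. clear Hs.
  split; intros y Hy; unfold ball2 in *.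
  - pose proof (dist2_tri x c' y). lra.
  - apply Hc. pose proof (dist2_tri c c' y).
    rewrite (dist2_sym c c') in H. lra.
Qed.

Theorem lemma1 (S : point -> Prop) (r : R) (hr : 0 < r) :
  rolling r S -> rolling r (compl S) ->
  forall (alpha : R), 0 < alpha ->
  forall x : point, S x ->
  exists c : point,
    (forall y, ball2 c (Rmin alpha r / 2) y -> ball2 x alpha y) /\
    (forall y, ball2 c (Rmin alpha r / 2) y -> S y).
Proof.
  intros HS HC alpha Ha x Sx.
  assert (Hm1 := Rmin_l alpha r). assert (Hm2 := Rmin_r alpha r).
  assert (Hm0 : 0 < Rmin alpha r) by (apply Rmin_glb_lt; lra).
  set (rho := Rmin alpha r / 2) in *.
  assert (Hrho : 0 < rho) by (unfold rho; lra).
  assert (Hra : 2 * rho <= alpha) by (unfold rho; lra).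
  assert (Hrr : rho <= r / 2) by (unfold rho; lra).
  clearbody rho.
  assert (Inner : forall z, boundary S z -> exists c, dist2 c z = r /\ forall y, ball2 c r y -> S y).
  { intros z Bz. destruct (HC z (boundary_compl S z Bz)) as [c [Hc1 Hc2]].
    exists c. split; [now apply boundary_ball|]. intros y Hy. apply NNPP. apply Hc1; auto. }
  destruct (classic (forall y, ball2 x rho y -> S y)) as [HA|HA].
  { exists x. split; auto. intros y Hy; unfold ball2 in *; lra. }
  apply not_all_ex_not in HA as [y0 Hy0]. apply imply_to_and in Hy0 as [Hy0 Sy0].
  destruct (classic (boundary S x)) as [Bx|Bx].
  { destruct (Inner x Bx) as [c [Dc Hc]].
    apply (finish S x alpha rho r x c); auto.
    rewrite sqd_lerp_l, sqd_sym, <- dist2_sq, Dc. right. field. lra. }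
  apply not_all_ex_not in Bx as [eps0 Heps0].
  apply imply_to_and in Heps0 as [Heps0 Hn].
  assert (Hball : forall y, ball2 x eps0 y -> S y).
  { intros y Hy. apply NNPP. intro Sy. apply Hn. split.
    - exists x. split; auto. unfold ball2; rewrite dist2_refl; lra.
    - exists y; auto. }
  assert (LBe : forall z, boundary S z -> eps0 <= dist2 x z).
  { intros z Bz. destruct (Rle_lt_dec eps0 (dist2 x z)) as [|Hl]; auto. exfalso.
    destruct (Bz (eps0 - dist2 x z)) as [_ [y [Hy Sy]]]; [lra|].
    apply Sy, Hball. unfold ball2 in *. pose proof (dist2_tri x z y). lra. }
  destruct (segment S x y0 Sx Sy0) as [z0 [Bz0 Dz0]].
  unfold ball2 in Hy0.
  set (LB := fun t => forall z, boundary S z -> t <= dist2 x z).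
  assert (HB : bound LB) by (exists (dist2 x z0); intros t Ht; apply Ht; auto).
  assert (HE : exists t, LB t) by (exists eps0; exact LBe).
  destruct (completeness LB HB HE) as [delta [Hub Hlub]].
  assert (Hd0 : eps0 <= delta) by (apply Hub; exact LBe).
  assert (Hdz : forall z, boundary S z -> delta <= dist2 x z).
  { intros z Bz. apply Hlub. intros t Ht. apply Ht; auto. }
  assert (Hdr : delta < rho) by (pose proof (Hdz z0 Bz0); lra).
  assert (P : forall w, ~ S w -> delta <= dist2 x w).
  { intros w Sw. destruct (segment S x w Sx Sw) as [z [Bz Dz]]. pose proof (Hdz z Bz). lra. }
  set (eps := Rmin delta (rho / 5)).
  assert (He1 := Rmin_l delta (rho/5)). assert (He2 := Rmin_r delta (rho/5)).
  assert (He0 : 0 < eps) by (apply Rmin_glb_lt; lra).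
  fold eps in He1, He2. clearbody eps.
  assert (Hz : exists z, boundary S z /\ dist2 x z < delta + eps).
  { apply NNPP. intro Hn'. assert (delta + eps <= delta); [|lra].
    apply Hub. intros z Bz. destruct (Rle_lt_dec (delta + eps) (dist2 x z)); auto.
    exfalso; apply Hn'; eauto. }
  destruct Hz as [z [Bz Dz]].
  destruct (Inner z Bz) as [c [Dc Hc]].
  destruct (HS z Bz) as [c2 [Hc2 Bc2]]. apply boundary_ball in Bc2.
  destruct (opposite S c c2 z r hr Hc Hc2 Dc Bc2) as [E1 E2].
  assert (Hxc2 : r + delta <= dist2 x c2).
  { destruct (Rle_lt_dec (r + delta) (dist2 x c2)) as [|HL]; auto. exfalso.
    set (L := dist2 x c2) in *.
    destruct (Rlt_le_dec L r) as [HL2|HL2].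
    { apply (Hc2 x); auto. unfold ball2; rewrite dist2_sym; auto. }
    set (th := (r + delta - L) / 2).
    set (s := (r - th) / L).
    assert (HL0 : 0 < L) by lra.
    assert (Hs1 : s * L = r - th) by (unfold s; field; lra).
    assert (Hs0 : 0 <= s) by (unfold s; apply Rmult_le_pos; [unfold th; lra| left; apply Rinv_0_lt_compat; lra]).
    assert (Hs2 : s <= 1).
    { apply Rmult_le_reg_r with L; auto. rewrite Hs1. unfold th; lra. }
    assert (Hw1 : dist2 c2 (lerp c2 x s) < r).
    { rewrite dist_lerp_l by auto. rewrite dist2_sym. fold L. unfold th in *; lra. }
    assert (Hw2 : dist2 (lerp c2 x s) x = (1 - s) * L).
    { rewrite dist_lerp_r by auto. rewrite dist2_sym. reflexivity. }
    pose proof (P (lerp c2 x s) (Hc2 _ Hw1)) as Hp.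
    rewrite dist2_sym, Hw2 in Hp. unfold th in *. nra. }
  apply (finish S x alpha rho r z c); auto.
  apply dist2_eq_sq in Dc.
  assert (Q1 : sqd x z < (delta + eps) ^ 2).
  { apply dist2_lt; [lra|auto]. }
  assert (Q2 : (r + delta) ^ 2 <= sqd x c2).
  { rewrite <- dist2_sq. apply pow_incr. lra. }
  assert (Hs : (rho / r) * r = rho) by (field; lra).
  set (s := rho / r) in *. clearbody s.
  destruct x as [x1 x2], z as [z1 z2], c as [a1 a2], c2 as [b1 b2].
  unfold sqd, lerp in *; cbn [fst snd] in *. subst b1 b2.
  set (X1 := x1 - z1). set (X2 := x2 - z2). set (U1 := a1 - z1). set (U2 := a2 - z2).
  replace (x1 - (z1 + s * U1)) with (X1 - s * U1) by (unfold X1, U1; ring).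
  replace (x2 - (z2 + s * U2)) with (X2 - s * U2) by (unfold X2, U2; ring).
  replace (x1 - (2 * z1 - a1)) with (X1 + U1) in Q2 by (unfold X1, U1; ring).
  replace (x2 - (2 * z2 - a2)) with (X2 + U2) in Q2 by (unfold X2, U2; ring).
  fold X1 X2 in Q1. fold U1 U2 in Dc. clearbody X1 X2 U1 U2.
  clear P. set (Q := X1^2 + X2^2) in *. set (P := X1*U1 + X2*U2).
  assert (EQ2 : (X1 + U1) ^ 2 + (X2 + U2) ^ 2 = Q + 2 * P + (U1^2+U2^2)) by (unfold Q, P; ring).
  assert (EG : (X1 - s * U1) ^ 2 + (X2 - s * U2) ^ 2 = Q - 2 * s * P + s^2 * (U1^2+U2^2)) by (unfold Q, P; ring).
  rewrite EG. rewrite EQ2 in Q2. rewrite Dc in Q2 |- *. clearbody Q P.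
  assert (Hd0' : 0 < delta) by lra.
  assert (H1 : Q <= delta^2 + 3 * delta * eps).
  { assert (eps * eps <= delta * eps) by (apply Rmult_le_compat_r; lra). nra. }
  assert (H2 : delta * r + 3 * eps * (r + rho) <= 2 * rho * r).
  { assert (3 * eps * (r + rho) <= 3 * (rho/5) * (r + r/2)).
    { apply Rmult_le_compat; lra. }
    assert (delta * r <= rho * r) by (apply Rmult_le_compat_r; lra).
    assert (E : 3 * (rho/5) * (r + r/2) = (9/10) * (rho * r)) by field.
    assert (0 < rho * r) by (apply Rmult_lt_0_compat; lra).
    assert (E' : 2 * rho * r = 2 * (rho * r)) by ring.
    lra. }
  assert (H3 : Q * (r + rho) <= rho * (2 * r * delta + delta^2)).
  { assert (Q * (r + rho) <= (delta^2 + 3 * delta * eps) * (r + rho))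
      by (apply Rmult_le_compat_r; lra).
    assert (delta * (delta * r + 3 * eps * (r + rho)) <= delta * (2 * rho * r))
      by (apply Rmult_le_compat_l; lra).
    assert (E : (delta^2 + 3*delta*eps)*(r+rho) = delta*(delta*r + 3*eps*(r+rho)) + delta^2*rho) by ring.
    assert (E' : rho*(2*r*delta+delta^2) = delta*(2*rho*r) + delta^2*rho) by ring.
    lra. }
  assert (H4 : rho * (2 * r * delta + delta^2 - Q) <= rho * (2 * P))
    by (apply Rmult_le_compat_l; lra).
  assert (H5 : r * Q <= 2 * rho * P).
  { assert (E : rho * (2 * r * delta + delta^2 - Q) = rho * (2 * r * delta + delta^2) - rho * Q) by ring.
    assert (E' : Q * (r + rho) = r * Q + rho * Q) by ring. lra. }
  assert (H6 : r * Q <= r * (2 * s * P)).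
  { replace (r * (2 * s * P)) with (2 * (s * r) * P) by ring. rewrite Hs. lra. }
  apply Rmult_le_reg_l in H6; [|lra].
  replace (s ^ 2 * r ^ 2) with ((s * r)^2) by ring. rewrite Hs. lra.
Qed.
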